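(* The map $G$ is regular on $(\mathcal{X},d)$: its set of periodic points (points $x$ with $G^n(x)=x$ for some $n\ge1$) is dense in $\mathcal{X}$.
   Context: Fix an integer $\mathsf{N}\ge 1$ and write $\llbracket a;b\rrbracket=\{a,a+1,\dots,b\}$. Let $f:\mathbb{Z}/4\mathbb{Z}\to\mathbb{Z}/4\mathbb{Z}$, $f(x)=x+1 \pmod 4$, with $f^{-1}(x)=x-1\pmod 4$ and $f^0=\mathrm{id}$. Let $\mathrm{sign}(x)=1$ if $x>0$, $0$ if $x=0$, $-1$ if $x<0$. For $k\in\llbracket -\mathsf{N};\mathsf{N}\rrbracket$ define $f_k:(\mathbb{Z}/4\mathbb{Z})^{\mathsf{N}}\to(\mathbb{Z}/4\mathbb{Z})^{\mathsf{N}}$ by $f_k(C_1,\dots,C_{\mathsf{N}})=(C_1,\dots,C_{|k|-1},f^{\mathrm{sign}(k)}(C_{|k|}),\dots,f^{\mathrm{sign}(k)}(C_{\mathsf{N}}))$ (so $f_0$ is the identity). Folding sequences are $F=(F^j)_{j\in\mathbb{N}}\in\llbracket -\mathsf{N};\mathsf{N}\rrbracket^{\mathbb{N}}$; let $i(F)=F^0$ and let $\sigma$ be the shift, $\sigma((F^j)_{j})=(F^{j+1})_{j}$. A finite sequence $(k_1,\dots,k_n)$ is identified with $(k_1,\dots,k_n,0,0,\dots)$. On $\check{\mathcal{X}}=(\mathbb{Z}/4\mathbb{Z})^{\mathsf{N}}\times\llbracket -\mathsf{N};\mathsf{N}\rrbracket^{\mathbb{N}}$ define $G((C,F))=(f_{i(F)}(C),\sigma(F))$.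 SAW requirement: for $C\in(\mathbb{Z}/4\mathbb{Z})^{\mathsf{N}}$ let $p(C)=(X_0,\dots,X_{\mathsf{N}})\in(\mathbb{Z}^2)^{\mathsf{N}+1}$ with $X_0=(0,0)$ and $X_i=X_{i-1}+v(C_i)$, where $v(0)=(1,0)$, $v(1)=(0,-1)$, $v(2)=(-1,0)$, $v(3)=(0,1)$. $C$ satisfies the SAW requirement iff the points $X_0,\dots,X_{\mathsf{N}}$ are pairwise distinct. Let $\mathfrak{C}_{\mathsf{N}}$ be the set of $C\in(\mathbb{Z}/4\mathbb{Z})^{\mathsf{N}}$ for which there exist $n\ge1$ and $k_1,\dots,k_n\in\llbracket -\mathsf{N};\mathsf{N}\rrbracket$ such that $C$ is the first component of $G^n(((0,\dots,0),(k_1,\dots,k_n)))$ and, for every $i\le n$, the first component of $G^i(((0,\dots,0),(k_1,\dots,k_n)))$ satisfies the SAW requirement. Let $\mathcal{X}=\mathfrak{C}_{\mathsf{N}}\times\llbracket -\mathsf{N};\mathsf{N}\rrbracket^{\mathbb{N}}$ with metric $d((C,F),(\check C,\check F))=d_C(C,\check C)+d_F(F,\check F)$, where $d_C(C,\check C)=\sum_{k=1}^{\mathsf{N}}\delta(C_k,\check C_k)2^{\mathsf{N}-k}$ ($\delta(a,b)=0$ if $a=b$, $1$ otherwise) and $d_F(F,\check F)=\frac{9}{2\mathsf{N}}\sum_{k=0}^{\infty}\frac{|F^k-\check F^k|}{10^{k+1}}$. The paper regards $G$ as a self-map of $\mathcal{X}$. *)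

(* Defs.v *)
From Stdlib Require Import Reals.
From Coquelicot Require Import Coquelicot.
From HB Require Import structures.
From mathcomp Require Import all_boot all_order all_algebra.
From mathcomp Require Import Rstruct.
Set Implicit Arguments. Unset Strict Implicit. Unset Printing Implicit Defensive.
Import Order.TTheory GRing.Theory Num.Theory.

(* A conformation C in (Z/4Z)^N: the k-th coordinate C_k (1 <= k <= N)
   is stored at ordinal k-1. *)
Definition conf (N : nat) := {ffun 'I_N -> 'Z_4}.

Definition fseq := nat -> int.
Definition is_fold_seq (N : nat) (F : fseq) : Prop :=
  forall j, (- (Posz N) <= F j)%R /\ (F j <= Posz N)%R.

Definition fpow (s : int) (x : 'Z_4) : 'Z_4 :=
  if (0 < s)%R then (x + 1)%R else if (s < 0)%R then (x - 1)%R else x.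

(* f_k : the coordinates C_{|k|}, ..., C_N are moved by f^{sign k}
   (index i : 'I_N corresponds to coordinate i+1). *)
Definition f_k (N : nat) (k : int) (C : conf N) : conf N :=
  [ffun i : 'I_N => if (`|k|%N <= i.+1)%N then fpow (sgz k) (C i) else C i].

Definition shift (F : fseq) : fseq := fun j => F j.+1.

Definition G (N : nat) (x : conf N * fseq) : conf N * fseq :=
  (f_k (x.2 0%N) x.1, shift x.2).

Definition pad (ks : seq int) : fseq := fun j => nth 0%R ks j.

Definition zero_conf (N : nat) : conf N := [ffun => 0%R].

(* the unit steps v(0)=(1,0), v(1)=(0,-1), v(2)=(-1,0), v(3)=(0,1) *)
Definition vx (c : 'Z_4) : int :=
  match val c with 0%N => 1%R | 2%N => (-1)%R | _ => 0%R end.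
Definition vy (c : 'Z_4) : int :=
  match val c with 1%N => (-1)%R | 3%N => 1%R | _ => 0%R end.

(* X_i = sum_{j=1}^{i} v(C_j) *)
Definition pos (N : nat) (C : conf N) (i : nat) : int * int :=
  ((\sum_(j < N | (j < i)%N) vx (C j))%R, (\sum_(j < N | (j < i)%N) vy (C j))%R).

Definition saw (N : nat) (C : conf N) : Prop :=
  forall i j, (i <= N)%N -> (j <= N)%N -> pos C i = pos C j -> i = j.

Definition frakC (N : nat) (C : conf N) : Prop :=
  exists ks : seq int, (1 <= size ks)%N /\
    (forall k, k \in ks -> (- (Posz N) <= k)%R /\ (k <= Posz N)%R) /\
    C = (iter (size ks) (@G N) (zero_conf N, pad ks)).1 /\
    (forall i, (i <= size ks)%N -> saw (iter i (@G N) (zero_conf N, pad ks)).1).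

Definition inX (N : nat) (x : conf N * fseq) : Prop :=
  frakC x.1 /\ is_fold_seq N x.2.

Definition d_C (N : nat) (C C' : conf N) : R :=
  (\sum_(i < N) (if C i == C' i then 0 else (2 ^ (N - i.+1))%N%:R))%R.
Definition d_F (N : nat) (F F' : fseq) : R :=
  (9 / (2 * INR N) *
   Series (fun k => ((`|F k - F' k|%R)%:~R : R) / 10 ^ (k + 1)))%R.
Definition dist_X (N : nat) (x y : conf N * fseq) : R :=
  (d_C x.1 y.1 + d_F N x.2 y.2)%R.

Definition periodic (N : nat) (x : conf N * fseq) : Prop :=
  exists n, (1 <= n)%N /\ iter n (@G N) x = x.

(* Main.v *)
Require Import Defs.
From Stdlib Require Import Reals.
From Coquelicot Require Import Coquelicot.
From HB Require Import structures.
From mathcomp Require Import all_boot all_order all_algebra.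
From mathcomp Require Import Rstruct ring lra.
From Stdlib Require Import FunctionalExtensionality.
Set Implicit Arguments. Unset Strict Implicit. Unset Printing Implicit Defensive.
Import Order.TTheory GRing.Theory Num.Theory.
Local Open Scope ring_scope.

Definition dstep (k : int) : 'Z_4 :=
  if 0 < sgz k then 1 else if sgz k < 0 then -1 else 0.
Definition delta (N : nat) (k : int) (i : 'I_N) : 'Z_4 :=
  if (`|k|%N <= i.+1)%N then dstep k else 0.

Lemma f_kE N k (C : conf N) : f_k k C = [ffun i => C i + delta k i].
Proof.
apply/ffunP => i; rewrite !ffunE /delta /dstep /fpow.
by case: ifP => _; [case: ifP => _; [|case: ifP]|]; rewrite ?addr0.
Qed.

Fixpoint T (N : nat) (n : nat) (F : fseq) (i : 'I_N) : 'Z_4 :=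
  match n with 0 => 0 | n'.+1 => T n' F i + delta (F n') i end.

Lemma iterG N n (C : conf N) (F : fseq) :
  iter n (@G N) (C, F) = ([ffun i => C i + T n F i], fun j => F (n + j)%N).
Proof.
elim: n => [|n IH].
  rewrite /=; f_equal; first by apply/ffunP => i; rewrite ffunE addr0.
rewrite iterS IH /G /=; f_equal.
  by apply/ffunP => i; rewrite f_kE !ffunE addn0 addrA.
by apply: functional_extensionality => j; rewrite /shift addnS addSn.
Qed.

Lemma Z4_4 (s : 'Z_4) : s + s + s + s = 0.
Proof. case: s => [[|[|[|[|n]]]] Hs] //; apply/val_inj => //. Qed.
Lemma pow4_10 k : (4 ^ k <= 10 ^ k)%N.
Proof. elim: k => // k IH; rewrite !expnS; exact: leq_mul. Qed.

Lemma pow_bound m k : (m <= k)%N -> (2 ^ (m + k) <= 10 ^ k.+1)%N.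
Proof.
move=> hmk; apply: (@leq_trans (2 ^ (k + k))); first by rewrite leq_pexp2l // leq_add2r.
rewrite expnD -expnMn; apply: (leq_trans (pow4_10 k)).
by rewrite expnS leq_pmull.
Qed.

Definition q : R := (2%:R)^-1.

Lemma term_bound N m (F F' : fseq) k :
  is_fold_seq N F -> is_fold_seq N F' -> (forall k, (k < m)%N -> F k = F' k) ->
  0 <= ((`|F k - F' k|%:~R : R) / 10 ^ (k + 1)) <= (2 * N%:R) * q ^+ m * q ^+ k.
Proof.
move=> hF hF' heq.
have -> : ((10%:R : R) ^ (Posz (k + 1)%N)) = 10%:R ^+ (k + 1)%N by [].
rewrite addn1.
have h10 : (0 : R) < 10 ^+ k.+1 by rewrite exprn_gt0.
case: (ltnP k m) => hk.
  rewrite heq // subrr normr0 mul0r lexx /=.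
  by rewrite /q !mulr_ge0 // ?exprn_ge0 // invr_ge0.
apply/andP; split.
  by rewrite divr_ge0 // ?ltW // ler0z normr_ge0.
have hd : `|F k - F' k| <= (2 * N)%N%:Z.
  apply: (le_trans (ler_normB _ _)).
  have [a1 a2] := hF k; have [b1 b2] := hF' k.
  have : `|F k| <= N%:Z by rewrite ler_norml a1 a2.
  have : `|F' k| <= N%:Z by rewrite ler_norml b1 b2.
  move=> u v. rewrite mul2n -addnn PoszD. exact: lerD.
have hr : (`|F k - F' k|%:~R : R) <= 2 * N%:R.
  have := hd; rewrite -(ler_int R) => h; apply: (le_trans h).
  by rewrite -pmulrn natrM.
rewrite -mulrA -exprD /q exprVn.
apply: ler_pM; first by rewrite ler0z normr_ge0.
  by rewrite invr_ge0 ltW.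
  exact: hr.
rewrite lef_pV2 ?posrE ?exprn_gt0 //.
rewrite -!natrX ler_nat. exact: pow_bound.
Qed.

Lemma q_lt1 : Rlt (Rabs q) 1.
Proof. apply/RltP. rewrite /q. change (`|(2%:R : R)^-1| < 1). rewrite ger0_norm ?invr_ge0 // invf_lt1 //; lra. Qed.

Lemma dF_bound N m (F F' : fseq) : (1 <= N)%N ->
  is_fold_seq N F -> is_fold_seq N F' -> (forall k, (k < m)%N -> F k = F' k) ->
  d_F N F F' <= 18 * q ^+ m.
Proof.
move=> hN hF hF' heq.
set c := 2 * N%:R * q ^+ m.
have hb : is_series (fun k => c * q ^+ k) (c * 2).
  have h := is_series_scal_l c _ _ (is_series_geom q q_lt1).
  move: h; set L := scal c (Rinv _) => h.
  have E : L = c * 2.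
    rewrite /L /q; change (c * ((1 - 2%:R^-1)^-1 : R) = c * 2); congr (_ * _).
    by field.
  rewrite E in h.
  apply: (is_series_ext _ _ _ _ h) => n /=. by rewrite RpowE.
have hle : Series (fun k => (`|F k - F' k|%:~R : R) / 10 ^ (k + 1)) <= c * 2.
  rewrite -(is_series_unique _ _ hb).
  apply/RleP; apply: Series_le; last by exists (c * 2).
  move=> n; have /andP[h1 h2] := term_bound n hF hF' heq.
  by split; apply/RleP.
rewrite /d_F INRE.
have hN0 : (N%:R : R) != 0 by rewrite pnatr_eq0 -lt0n.
have h9 : (0 : R) <= 9 / (2 * N%:R) by rewrite divr_ge0 // mulr_ge0.
apply: (le_trans (ler_wpM2l h9 hle)).
rewrite /c le_eqVlt; apply/orP; left; apply/eqP.
by field.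
Qed.

Lemma Z4_4' (x s : 'Z_4) : x + s + s + s + s = x.
Proof. by rewrite -[RHS]addr0 -(Z4_4 s) !addrA. Qed.

Lemma dC0 N (C : conf N) : d_C C C = 0.
Proof. by rewrite /d_C big1 // => i _; rewrite eqxx. Qed.

Theorem mainTheorem3 (N : nat) (hN : (1 <= N)%N) :
  forall (x : conf N * fseq), inX x ->
  forall eps : R, (0 < eps)%R ->
  exists y : conf N * fseq, inX y /\ periodic y /\ (dist_X x y < eps)%R.
Proof.
move=> [C F] [hC hF] eps heps.
have heps18' : 0 < eps / 18 by apply: divr_gt0 => //; rewrite ltr0n.
have heps18 := (RltP heps18').
have [n0 hn0] := pow_lt_1_zero q q_lt1 _ heps18.
set m := maxn n0 1.
have hm : (1 <= m)%N by rewrite leq_maxr.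
have hqm : 18 * q ^+ m < eps.
  have := hn0 m (ssrnat.leP (leq_maxl n0 1)).
  rewrite RpowE => /RltP h.
  have hq0 : 0 <= q ^+ m by rewrite exprn_ge0 // /q invr_ge0.
  rewrite Rabs_pos_eq in h; last by apply/RleP.
  have : q ^+ m < eps / 18 by exact: h.
  lra.
set F' : fseq := fun j => F (j %% m)%N.
have hF' : is_fold_seq N F' by move=> j; exact: hF.
have step : forall C' : conf N,
    iter m (@G N) (C', F') = ([ffun i => C' i + T m F' i], F').
  move=> C'; rewrite iterG; congr pair.
  by apply: functional_extensionality => j; rewrite /F' modnDl.
exists (C, F'); split; first by split.
split.
  exists (m + (m + (m + m)))%N; split; first by rewrite addn_gt0 hm.
  rewrite !iterD !step; congr pair.
  by apply/ffunP => i; rewrite !ffunE Z4_4'.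
rewrite /dist_X /= dC0 add0r.
apply: (le_lt_trans _ hqm).
apply: dF_bound => // k hk.
by rewrite /F' modn_small.
Qed.
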